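(* Let $0<\alpha<1$ and $f>0$. Then the function $$t\mapsto\left(\frac{t}{(1-\alpha)f+\alpha t}\right)^{\frac{1}{1-\alpha}}\cdot\frac{f}{t}$$ is increasing in $t$ on the range of $t>0$ with $\frac{f}{t}\ge 1$. *)

(* Defs.v *)
From Stdlib Require Import Reals.
Open Scope R_scope.

Definition gfun (alpha f t : R) : R :=
  Rpower (t / ((1 - alpha) * f + alpha * t)) (1 / (1 - alpha)) * (f / t).

(* Main.v *)
Require Import Defs.
From Stdlib Require Import Reals Lra.
Open Scope R_scope.

Lemma key (a x : R) : 0 < a -> a < 1 -> x <> 0 -> exp (a * x) < 1 - a + a * exp x.
Proof.
  intros ha0 ha1 hx.
  assert (hA := exp_ineq1_le ((1 - a) * x)).
  assert (hB : 1 + (- a * x) < exp (- a * x)).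
  { apply exp_ineq1. intro h. apply hx. nra. }
  assert (e1 : exp (a * x) * exp ((1 - a) * x) = exp x).
  { rewrite <- exp_plus. f_equal. ring. }
  assert (e2 : exp (a * x) * exp (- a * x) = 1).
  { rewrite <- exp_plus. replace (a * x + - a * x) with 0 by ring. apply exp_0. }
  assert (hp := exp_pos (a * x)).
  assert (hq : exp (a * x) * (a * exp ((1 - a) * x) + (1 - a) * exp (- a * x)) > exp (a * x) * 1).
  { apply Rmult_lt_compat_l; [exact hp|]. nra. }
  nra.
Qed.

Theorem mainTheorem10 (alpha f : R) (ha0 : 0 < alpha) (ha1 : alpha < 1) (hf : 0 < f) :
  forall t1 t2 : R, 0 < t1 -> 0 < t2 -> f / t1 >= 1 -> f / t2 >= 1 ->
    t1 < t2 -> gfun alpha f t1 < gfun alpha f t2.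
Proof.
  intros t1 t2 h1 h2 hf1 hf2 h12.
  assert (ht2f : t2 <= f).
  { apply Rge_le in hf2. apply (Rmult_le_compat_r t2) in hf2; [|lra].
    unfold Rdiv in hf2. rewrite Rmult_assoc, Rinv_l in hf2; lra. }
  set (E1 := (1 - alpha) * f + alpha * t1).
  set (E2 := (1 - alpha) * f + alpha * t2).
  assert (hE1 : 0 < E1) by (unfold E1; nra).
  assert (hE2 : 0 < E2) by (unfold E2; nra).
  set (x := ln t1 - ln t2).
  assert (hx : x < 0) by (unfold x; pose proof (ln_increasing _ _ h1 h12); lra).
  assert (hex : exp x = t1 / t2).
  { unfold x. unfold Rminus. rewrite exp_plus, exp_ln by lra.
    rewrite <- ln_Rinv by lra. rewrite exp_ln; [reflexivity|]. apply Rinv_0_lt_compat; lra. }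
  assert (hk := key alpha x ha0 ha1 ltac:(lra)).
  rewrite hex in hk.
  assert (hle : 1 - alpha + alpha * (t1 / t2) <= E1 / E2).
  { apply (Rmult_le_reg_r (t2 * E2)); [nra|].
    replace ((1 - alpha + alpha * (t1 / t2)) * (t2 * E2)) with ((1 - alpha) * t2 * E2 + alpha * t1 * E2) by (field; lra).
    replace (E1 / E2 * (t2 * E2)) with (E1 * t2) by (field; lra).
    unfold E1, E2.
    assert (0 <= (1 - alpha) * alpha * (f - t2) * (t2 - t1)).
    { apply Rmult_le_pos; [|lra]. apply Rmult_le_pos; [|lra]. nra. }
    nra. }
  assert (hlog : alpha * x < ln E1 - ln E2).
  { assert (h := ln_increasing _ _ (exp_pos (alpha * x)) (Rlt_le_trans _ _ _ hk hle)).
    rewrite ln_exp in h. unfold Rdiv in h. rewrite ln_mult, ln_Rinv in h; try lra.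
    apply Rinv_0_lt_compat; lra. }
  unfold gfun, Rpower. fold E1 E2.
  assert (G : forall t E, 0 < t -> 0 < E ->
    exp (1 / (1 - alpha) * ln (t / E)) * (f / t)
    = exp (1 / (1 - alpha) * (ln t - ln E) + ln f - ln t)).
  { intros t E ht hE.
    replace (1 / (1 - alpha) * (ln t - ln E) + ln f - ln t)
      with (1 / (1 - alpha) * ln (t / E) + (ln f + ln (/ t))).
    - rewrite exp_plus. f_equal. rewrite <- ln_mult; try lra.
      + rewrite exp_ln; [reflexivity|]. apply Rmult_lt_0_compat; [lra|]. apply Rinv_0_lt_compat; lra.
      + apply Rinv_0_lt_compat; lra.
    - unfold Rdiv. rewrite (ln_mult t (/ E)), !ln_Rinv; try lra.
      apply Rinv_0_lt_compat; lra. }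
  rewrite !G by lra.
  apply exp_increasing.
  assert (hp : 0 < 1 - alpha) by lra.
  apply (Rmult_lt_reg_l (1 - alpha)); [lra|].
  replace ((1 - alpha) * (1 / (1 - alpha) * (ln t1 - ln E1) + ln f - ln t1))
    with (alpha * ln t1 - ln E1 + (1 - alpha) * ln f) by (field; lra).
  replace ((1 - alpha) * (1 / (1 - alpha) * (ln t2 - ln E2) + ln f - ln t2))
    with (alpha * ln t2 - ln E2 + (1 - alpha) * ln f) by (field; lra).
  unfold x in hlog. nra.
Qed.
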